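(* Let $S$ be a Stone relation algebra satisfying the point axiom, i.e., the set $\mathrm{IP}(S)$ of ideal-points of $S$ is finite and non-empty and $\top=\bigsqcup\mathrm{IP}(S)$. Let $x\in S$. Then: 1. $1=\bigsqcup\{pp^{\smile}\mid p\in\mathrm{IP}(S)\}$. 2. $x=\bigsqcup\{pp^{\smile}xqq^{\smile}\mid p,q\in\mathrm{IP}(S)\}$. 3. For each atom $a\in S$ there is $p\in\mathrm{IP}(S)$ with $a\sqsubseteq p$. 4. Every point of $S$ is an ideal-point.
   Context: A Stone relation algebra is a structure $(S,\sqcup,\sqcap,\cdot,\overline{\,\cdot\,},{}^{\smile},\bot,\top,1)$ (write $xy$ for $x\cdot y$, $\overline{x}$ for the pseudocomplement, $x^{\smile}$ for the converse) such that: $(S,\sqcup,\sqcap,\bot,\top)$ is a bounded distributive lattice with order $x\sqsubseteq y\iff x\sqcup y=y$; $x\sqcap y=\bot\iff x\sqsubseteq\overline{y}$; $\overline{x}\sqcup\overline{\overline{x}}=\top$; $\cdot$ is associative with two-sided unit $1$, distributes over $\sqcup$ on both sides, and $\bot$ is a zero of $\cdot$; $x^{\smile\smile}=x$, $(xy)^{\smile}=y^{\smile}x^{\smile}$, $(x\sqcup y)^{\smile}=x^{\smile}\sqcup y^{\smile}$; $\overline{\overline{1}}=1$; $\overline{\overline{xy}}=\overline{\overline{x}}\,\overline{\overline{y}}$; $xy\sqcap z\sqsubseteq x(y\sqcap x^{\smile}z)$. $\bigsqcup P$ is the join of a finite non-empty set $P$. $x$ is injective if $xx^{\smile}\sqsubseteq1$,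 surjective if $1\sqsubseteq x^{\smile}x$, a vector if $x\top=x$, a covector if $\top x=x$, an ideal if it is a vector and a covector, and a point if it is an injective surjective vector. An ideal-point is a point $p$ such that for all points $q$ and all ideals $x\neq\bot$, $qx\sqsubseteq p$ implies $q\sqsubseteq p$. An atom is an element $x\neq\bot$ such that $\bot\neq y\sqsubseteq x$ implies $y=x$. *)

(* Defs.v *)
From Stdlib Require Import List.
Import ListNotations.

Record StoneRA := {
  carrier :> Type;
  sup : carrier -> carrier -> carrier;
  inf : carrier -> carrier -> carrier;
  comp : carrier -> carrier -> carrier;
  pc : carrier -> carrier;
  conv : carrier -> carrier;
  bot : carrier;
  top : carrier;
  one : carrier;
  sup_assoc : forall x y z, sup x (sup y z) = sup (sup x y) z;
  sup_comm : forall x y, sup x y = sup y x;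
  sup_idem : forall x, sup x x = x;
  inf_assoc : forall x y z, inf x (inf y z) = inf (inf x y) z;
  inf_comm : forall x y, inf x y = inf y x;
  inf_idem : forall x, inf x x = x;
  sup_absorb : forall x y, sup x (inf x y) = x;
  inf_absorb : forall x y, inf x (sup x y) = x;
  inf_sup_distr : forall x y z, inf x (sup y z) = sup (inf x y) (inf x z);
  sup_bot : forall x, sup bot x = x;
  inf_top : forall x, inf top x = x;
  (* pseudocomplement; order x ⊑ y iff x ⊔ y = y *)
  pc_spec : forall x y, inf x y = bot <-> sup x (pc y) = pc y;
  stone : forall x, sup (pc x) (pc (pc x)) = top;
  comp_assoc : forall x y z, comp x (comp y z) = comp (comp x y) z;
  comp_one_l : forall x, comp one x = x;
  comp_one_r : forall x, comp x one = x;
  comp_sup_l : forall x y z, comp (sup x y) z = sup (comp x z) (comp y z);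
  comp_sup_r : forall x y z, comp x (sup y z) = sup (comp x y) (comp x z);
  comp_bot_l : forall x, comp bot x = bot;
  comp_bot_r : forall x, comp x bot = bot;
  conv_invol : forall x, conv (conv x) = x;
  conv_comp : forall x y, conv (comp x y) = comp (conv y) (conv x);
  conv_sup : forall x y, conv (sup x y) = sup (conv x) (conv y);
  pc_pc_one : pc (pc one) = one;
  pc_pc_comp : forall x y, pc (pc (comp x y)) = comp (pc (pc x)) (pc (pc y));
  dedekind : forall x y z,
    sup (inf (comp x y) z) (comp x (inf y (comp (conv x) z)))
    = comp x (inf y (comp (conv x) z))
}.

Section Notions.
Variable S : StoneRA.

Definition le (x y : S) : Prop := sup S x y = y.

Definition injective (x : S) : Prop := le (comp S x (conv S x)) (one S).
Definition surjective (x : S) : Prop := le (one S) (comp S (conv S x) x).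
Definition vector (x : S) : Prop := comp S x (top S) = x.
Definition covector (x : S) : Prop := comp S (top S) x = x.
Definition ideal (x : S) : Prop := vector x /\ covector x.
Definition point (x : S) : Prop := injective x /\ surjective x /\ vector x.

Definition ideal_point (p : S) : Prop :=
  point p /\
  forall (q x : S), point q -> ideal x -> x <> bot S ->
    le (comp S q x) p -> le q p.

Definition atom (x : S) : Prop :=
  x <> bot S /\ forall y : S, y <> bot S -> le y x -> y = x.

(* join of a finite list of elements (bot for the empty list; used only on
   non-empty lists, where it is the join of the set of its elements) *)
Definition bigsup (l : list S) : S := fold_right (sup S) (bot S) l.

End Notions.

(* Main.v *)
Require Import Defs.
From Stdlib Require Import List Classical.
Import ListNotations.

Lemma le_refl (S : StoneRA) (x : S) : le S x x.
Proof. apply sup_idem. Qed.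

Lemma le_trans' (S : StoneRA) (x y z : S) : le S x y -> le S y z -> le S x z.
Proof. unfold le; intros H1 H2. rewrite <- H2, sup_assoc, H1. reflexivity. Qed.

Lemma le_antisym (S : StoneRA) (x y : S) : le S x y -> le S y x -> x = y.
Proof. unfold le; intros H1 H2. rewrite <- H1, <- H2 at 1. apply sup_comm. Qed.

Lemma sup_le (S : StoneRA) (x y z : S) : le S x z -> le S y z -> le S (sup S x y) z.
Proof. unfold le; intros H1 H2. rewrite <- sup_assoc, H2, H1. reflexivity. Qed.

Lemma le_sup_l (S : StoneRA) (x y : S) : le S x (sup S x y).
Proof. unfold le. rewrite sup_assoc, sup_idem. reflexivity. Qed.

Lemma le_sup_r (S : StoneRA) (x y : S) : le S y (sup S x y).
Proof. rewrite sup_comm. apply le_sup_l. Qed.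

Lemma le_inf_eq (S : StoneRA) (x y : S) : le S x y <-> inf S x y = x.
Proof.
  unfold le; split; intro H.
  - rewrite <- H. apply inf_absorb.
  - rewrite <- H, sup_comm, inf_comm. apply sup_absorb.
Qed.

Lemma inf_le_l (S : StoneRA) (x y : S) : le S (inf S x y) x.
Proof. unfold le. rewrite sup_comm. apply sup_absorb. Qed.

Lemma inf_le_r (S : StoneRA) (x y : S) : le S (inf S x y) y.
Proof. rewrite inf_comm. apply inf_le_l. Qed.

Lemma le_inf (S : StoneRA) (x y z : S) : le S z x -> le S z y -> le S z (inf S x y).
Proof.
  intros H1 H2. apply le_inf_eq in H1. apply le_inf_eq in H2. apply le_inf_eq.
  rewrite inf_assoc, H1, H2. reflexivity.
Qed.

Lemma le_top (S : StoneRA) (x : S) : le S x (top S).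
Proof.
  unfold le. rewrite sup_comm. rewrite <- (inf_top S x) at 1. apply sup_absorb.
Qed.

Lemma bot_le (S : StoneRA) (x : S) : le S (bot S) x.
Proof. apply sup_bot. Qed.

Lemma le_bot (S : StoneRA) (x : S) : le S x (bot S) -> x = bot S.
Proof. intro H. apply le_antisym; auto using bot_le. Qed.

Lemma comp_mono_r (S : StoneRA) (x y z : S) : le S x y -> le S (comp S z x) (comp S z y).
Proof. unfold le; intro H. rewrite <- comp_sup_r, H. reflexivity. Qed.

Lemma comp_mono_l (S : StoneRA) (x y z : S) : le S x y -> le S (comp S x z) (comp S y z).
Proof. unfold le; intro H. rewrite <- comp_sup_l, H. reflexivity. Qed.

Lemma conv_mono (S : StoneRA) (x y : S) : le S x y -> le S (conv S x) (conv S y).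
Proof. unfold le; intro H. rewrite <- conv_sup, H. reflexivity. Qed.

Lemma conv_top (S : StoneRA) : conv S (top S) = top S.
Proof.
  apply le_antisym. apply le_top.
  rewrite <- (conv_invol S (top S)) at 1. apply conv_mono, le_top.
Qed.

Lemma dedekind_le (S : StoneRA) (x y z : S) :
  le S (inf S (comp S x y) z) (comp S x (inf S y (comp S (conv S x) z))).
Proof. apply dedekind. Qed.

Lemma bigsup_le (S : StoneRA) (l : list S) (z : S) :
  (forall y, In y l -> le S y z) -> le S (bigsup S l) z.
Proof.
  induction l; simpl; intros H. apply bot_le.
  apply sup_le; auto.
Qed.

Lemma bigsup_mono (S : StoneRA) (A : Type) (f g : A -> S) (l : list A) :
  (forall a, In a l -> le S (f a) (g a)) ->
  le S (bigsup S (map f l)) (bigsup S (map g l)).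
Proof.
  induction l; simpl; intros H. apply le_refl.
  apply sup_le.
  - apply le_trans' with (g a); auto. apply le_sup_l.
  - apply le_trans' with (bigsup S (map g l)); auto. apply le_sup_r.
Qed.

Lemma inf_bigsup (S : StoneRA) (a : S) (l : list S) :
  inf S a (bigsup S l) = bigsup S (map (inf S a) l).
Proof.
  induction l; simpl.
  - pose proof (bot_le S a) as H. apply le_inf_eq in H. rewrite inf_comm. exact H.
  - rewrite inf_sup_distr, IHl. reflexivity.
Qed.

Lemma comp_bigsup_r (S : StoneRA) (A : Type) (a : S) (f : A -> S) (l : list A) :
  comp S a (bigsup S (map f l)) = bigsup S (map (fun y => comp S a (f y)) l).
Proof.
  induction l; simpl. apply comp_bot_r. rewrite comp_sup_r, IHl. reflexivity.
Qed.

Lemma comp_bigsup_l (S : StoneRA) (A : Type) (a : S) (f : A -> S) (l : list A) :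
  comp S (bigsup S (map f l)) a = bigsup S (map (fun y => comp S (f y) a) l).
Proof.
  induction l; simpl. apply comp_bot_l. rewrite comp_sup_l, IHl. reflexivity.
Qed.

Lemma bigsup_app (S : StoneRA) (l1 l2 : list S) :
  bigsup S (l1 ++ l2) = sup S (bigsup S l1) (bigsup S l2).
Proof.
  induction l1; simpl. rewrite sup_bot. reflexivity.
  rewrite IHl1, sup_assoc. reflexivity.
Qed.

Lemma bigsup_flat_map (S : StoneRA) (A : Type) (g : A -> list S) (l : list A) :
  bigsup S (flat_map g l) = bigsup S (map (fun a => bigsup S (g a)) l).
Proof.
  induction l; simpl. reflexivity. rewrite bigsup_app, IHl. reflexivity.
Qed.

Lemma bigsup_map_ext (S : StoneRA) (A : Type) (f g : A -> S) (l : list A) :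
  (forall a, f a = g a) -> bigsup S (map f l) = bigsup S (map g l).
Proof. intro H. f_equal. apply map_ext. exact H. Qed.

Lemma bigsup_all_bot (S : StoneRA) (l : list S) :
  (forall y, In y l -> y = bot S) -> bigsup S l = bot S.
Proof.
  intro H. apply le_bot, bigsup_le. intros y Hy. rewrite (H y Hy). apply le_refl.
Qed.

Lemma inf_vector (S : StoneRA) (p r : S) :
  vector S p -> vector S r -> vector S (inf S p r).
Proof.
  unfold vector; intros Hp Hr. apply le_antisym.
  - apply le_inf.
    + rewrite <- Hp at 2. apply comp_mono_l, inf_le_l.
    + rewrite <- Hr at 2. apply comp_mono_l, inf_le_r.
  - rewrite <- (comp_one_r S (inf S p r)) at 1. apply comp_mono_r, le_top.
Qed.

Lemma point_eq (S : StoneRA) (p r : S) :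
  point S p -> point S r -> le S p r -> p = r.
Proof.
  intros [Hpi [Hps Hpv]] [Hri [Hrs Hrv]] H. apply le_antisym; auto.
  rewrite <- (comp_one_r S r).
  apply le_trans' with (comp S r (comp S (conv S p) p)).
  apply comp_mono_r, Hps.
  rewrite comp_assoc.
  apply le_trans' with (comp S (comp S r (conv S r)) p).
  apply comp_mono_l, comp_mono_r, conv_mono, H.
  rewrite <- (comp_one_l S p) at 2. apply comp_mono_l, Hri.
Qed.

Lemma one_le_pp (S : StoneRA) (p : S) : vector S p ->
  le S (inf S (one S) p) (comp S p (conv S p)).
Proof.
  intro Hv. rewrite inf_comm. rewrite <- Hv at 1.
  eapply le_trans'. apply dedekind_le.
  rewrite inf_top, comp_one_r. apply le_refl.
Qed.

Theorem mainTheorem12 (S : StoneRA) (ips : list S)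
  (Hips : forall p : S, In p ips <-> ideal_point S p)
  (Hne : ips <> [])
  (Htop : top S = bigsup S ips)
  (x : S) :
  one S = bigsup S (map (fun p => comp S p (conv S p)) ips) /\
  x = bigsup S (flat_map (fun p =>
         map (fun q => comp S (comp S (comp S (comp S p (conv S p)) x) q) (conv S q))
             ips) ips) /\
  (forall a : S, atom S a -> exists p, In p ips /\ le S a p) /\
  (forall p : S, point S p -> ideal_point S p).
Proof.
  assert (H1 : one S = bigsup S (map (fun p => comp S p (conv S p)) ips)).
  { apply le_antisym.
    - rewrite <- (inf_top S (one S)), inf_comm, Htop, inf_bigsup.
      apply bigsup_mono. intros p Hp. apply Hips in Hp as [[_ [_ Hv]] _].
      apply one_le_pp, Hv.
    - apply bigsup_le. intros y Hy. apply in_map_iff in Hy as [p [<- Hp]].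
      apply Hips in Hp as [[Hi _] _]. exact Hi. }
  split; [exact H1|]. split.
  { rewrite bigsup_flat_map.
    rewrite <- (comp_one_l S x) at 1. rewrite <- (comp_one_r S (comp S (one S) x)).
    rewrite H1 at 1. rewrite comp_bigsup_l, comp_bigsup_l.
    apply bigsup_map_ext. intro p. rewrite H1, comp_bigsup_r.
    apply bigsup_map_ext. intro q. rewrite !comp_assoc. reflexivity. }
  split.
  { intros a [Ha Hat].
    destruct (classic (exists p, In p ips /\ inf S a p <> bot S)) as [[p [Hp Hap]]|Hn].
    - exists p. split; auto. apply le_inf_eq. apply Hat; auto. apply inf_le_l.
    - exfalso. apply Ha.
      rewrite <- (inf_top S a), inf_comm, Htop, inf_bigsup.
      apply bigsup_all_bot. intros y Hy. apply in_map_iff in Hy as [p [<- Hp]].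
      apply NNPP. intro Hc. apply Hn. eauto. }
  intros p Hpt.
  destruct (classic (exists r, In r ips /\ inf S p r <> bot S)) as [[r [Hr Hpr]]|Hn].
  - assert (Hr' := Hr). apply Hips in Hr' as [Hrp Hrc].
    destruct Hpt as [Hpi [Hps Hpv]] eqn:E.
    assert (Hrv : vector S r) by apply Hrp.
    set (y := comp S (conv S p) (inf S p r)).
    assert (Hprv := inf_vector S p r Hpv Hrv).
    assert (Hy : ideal S y).
    { split; unfold vector, covector, y.
      - rewrite <- comp_assoc, Hprv. reflexivity.
      - rewrite comp_assoc. f_equal.
        rewrite <- conv_top, <- conv_comp, Hpv. reflexivity. }
    assert (Hyb : y <> bot S).
    { intro Hb. apply Hpr. apply le_bot.
      assert (E2 : inf S p r = inf S (comp S p (top S)) (inf S p r)).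
      { rewrite Hpv, inf_assoc, inf_idem. reflexivity. }
      rewrite E2. eapply le_trans'. apply dedekind_le.
      rewrite inf_top. fold y. rewrite Hb, comp_bot_r. apply le_refl. }
    assert (Hle : le S (comp S p y) r).
    { unfold y. rewrite comp_assoc.
      apply le_trans' with (comp S (one S) (inf S p r)).
      apply comp_mono_l, Hpi. rewrite comp_one_l. apply inf_le_r. }
    assert (Hpr2 : le S p r) by (apply (Hrc p y); auto).
    rewrite (point_eq S p r Hpt Hrp Hpr2). exact (proj1 (Hips r) Hr).
  - assert (Hb : p = bot S).
    { rewrite <- (inf_top S p), inf_comm, Htop, inf_bigsup.
      apply bigsup_all_bot. intros y Hy. apply in_map_iff in Hy as [r [<- Hr]].
      apply NNPP. intro Hc. apply Hn. eauto. }
    split; auto. intros q z _ _ Hz _. exfalso. apply Hz.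
    destruct Hpt as [_ [Hps _]]. unfold surjective in Hps. rewrite Hb, comp_bot_r in Hps.
    apply le_bot in Hps. rewrite <- (comp_one_r S z), Hps, comp_bot_r. reflexivity.
Qed.
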